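(* Let $p$ be a prime, let $e\geq2$ and $d\geq2$ be integers, let $\lambda\in\{1,\dots,\min(e,d-1)\}$, and let $\alpha=(\alpha_1,\dots,\alpha_d)\in\mathcal R_\lambda(d,e)$ with $\mu=\mu(\alpha)$. Then $$\sum_{i=1}^d p^{\alpha_i}x_i\geq \lambda p^{\mu+1}+(d-\lambda)p^\mu$$ for every $(x_1,\dots,x_d)\in\mathcal P(p^e,d)$, where $\mathcal P(p^e,d)\subset\mathbb R^d$ is the convex hull of all $d$-dimensional vector-factorisations of $p^e$.
   Context: $\mathbb N=\{0,1,2,\dots\}$. A $d$-dimensional vector-factorisation of $N\geq1$ is a vector $(v_1,\dots,v_d)\in\mathbb N^d$ with $v_1\cdots v_d=N$. $\mathcal R_\lambda(d,e)$ is the set of all $\alpha\in\mathbb N^d$ with $\min(\alpha_1,\dots,\alpha_d)=0$, $\max(\alpha_1,\dots,\alpha_d)\,d<e+\sum_i\alpha_i$ and $e+\sum_i\alpha_i\equiv\lambda\pmod d$. For such $\alpha$, $\mu(\alpha)$ is the integer with $\mu(\alpha)d+\lambda=e+\sum_{i=1}^d\alpha_i$. *)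

(* Defs.v *)
From HB Require Import structures.
From mathcomp Require Import all_boot all_order all_algebra.
From mathcomp Require Import reals.
Set Implicit Arguments. Unset Strict Implicit. Unset Printing Implicit Defensive.
Import Order.TTheory GRing.Theory Num.Theory.

Definition vector_factorisation (d N : nat) (v : 'I_d -> nat) : Prop :=
  (\prod_(i < d) v i)%N = N.

Definition R_lambda (lambda d e : nat) (alpha : 'I_d -> nat) : Prop :=
  (exists i, alpha i = 0%N) /\
  ((\max_(i < d) alpha i) * d < e + \sum_(i < d) alpha i)%N /\
  (e + \sum_(i < d) alpha i = lambda %[mod d])%N.

Definition in_P (R : realType) (N d : nat) (x : 'I_d -> R) : Prop :=
  exists (m : nat) (v : 'I_m -> 'I_d -> nat) (t : 'I_m -> R),
    (forall j, vector_factorisation N (v j)) /\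
    (forall j, 0 <= t j)%R /\
    (\sum_(j < m) t j = 1)%R /\
    (forall i, x i = \sum_(j < m) t j * ((v j i)%:R))%R.

(* Main.v *)
Require Import Defs.
From HB Require Import structures.
From mathcomp Require Import all_boot all_order all_algebra.
From mathcomp Require Import reals.
From mathcomp Require Import zify.
Import Order.TTheory GRing.Theory Num.Theory.

Lemma bern (p k : nat) : 0 < p -> 1 + k * (p - 1) <= p ^ k.
Proof.
move=> p0; elim: k => [|k IH]; first by rewrite expn0.
rewrite expnS. have h : 1 <= p ^ k by rewrite expn_gt0 p0.
nia.
Qed.

Lemma key (p mu c : nat) : 1 < p ->
  p ^ mu + c * (p ^ mu * (p - 1)) <= p ^ c + mu * (p ^ mu * (p - 1)).
Proof.
move=> p1; have hP : 0 < p ^ mu by rewrite expn_gt0; lia.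
case: (leqP mu c) => h.
- rewrite -(subnKC h) expnD.
  have := @bern p (c - mu) (ltnW p1).
  set k := c - mu; set P := p ^ mu; set Q := p ^ k => hb. nia.
- set P := p ^ mu. have : P <= P * (p - 1) by nia. nia.
Qed.

Lemma sumkey (p mu lambda d : nat) (c : 'I_d -> nat) : 1 < p -> lambda <= d ->
  \sum_(i < d) c i = mu * d + lambda ->
  lambda * p ^ mu.+1 + (d - lambda) * p ^ mu <= \sum_(i < d) p ^ c i.
Proof.
move=> p1 ld hs.
have H : \sum_(i < d) (p ^ mu + c i * (p ^ mu * (p - 1)))
   <= \sum_(i < d) (p ^ c i + mu * (p ^ mu * (p - 1))).
  by apply: leq_sum => i _; apply: key.
rewrite !big_split /= -big_distrl /= hs !sum_nat_const card_ord in H.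
rewrite expnS. move: H. set P := p ^ mu. set S := \sum_(i < d) _. nia.
Qed.

Lemma vert (p e mu lambda d : nat) (alpha v : 'I_d -> nat) : prime p -> lambda <= d ->
  mu * d + lambda = e + \sum_(i < d) alpha i ->
  vector_factorisation (p ^ e) v ->
  lambda * p ^ mu.+1 + (d - lambda) * p ^ mu <= \sum_(i < d) p ^ alpha i * v i.
Proof.
move=> pp ld hs hv.
have p1 : 1 < p by apply: prime_gt1.
have hb : forall i, exists b, v i == p ^ b.
  move=> i; have : v i %| p ^ e.
    by rewrite -hv /vector_factorisation (bigD1 i) //= dvdn_mulr.
  by case/dvdn_pfactor => // b _ ->; exists b.
pose b i := xchoose (hb i).
have vb : forall i, v i = p ^ b i by move=> i; apply/eqP; exact: (xchooseP (hb i)).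
have sb : \sum_(i < d) b i = e.
  apply/eqP; rewrite -(eqn_exp2l _ _ p1) -hv /vector_factorisation.
  rewrite (big_morph _ (expnD p) (expn0 p)); apply/eqP.
  by apply: eq_bigr => i _; rewrite vb.
rewrite (eq_bigr (fun i => p ^ (alpha i + b i))); last by move=> i _; rewrite expnD vb.
by apply: sumkey => //; rewrite big_split /= sb hs addnC.
Qed.

Theorem proposition3p1 (R : realType) (p e d lambda : nat) (alpha : 'I_d -> nat)
    (mu : nat) (x : 'I_d -> R) :
  prime p -> (2 <= e)%N -> (2 <= d)%N ->
  (1 <= lambda)%N -> (lambda <= minn e d.-1)%N ->
  @R_lambda lambda d e alpha ->
  (mu * d + lambda = e + \sum_(i < d) alpha i)%N ->
  @in_P R (p ^ e) d x ->
  ((lambda * p ^ mu.+1 + (d - lambda) * p ^ mu)%:R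
     <= \sum_(i < d) (p ^ alpha i)%:R * x i)%R.
Proof.
move=> pp _ _ _ hl _ hmu [m [v [t [hv [ht [h1 hx]]]]]].
have ld : (lambda <= d)%N by move: hl; rewrite leq_min => /andP[_]; lia.
set K := (_ + _)%N.
under eq_bigr => i _ do rewrite hx mulr_sumr.
rewrite exchange_big /=.
have eK : (K%:R = (\sum_(j < m) t j) * K%:R :> R)%R by rewrite h1 mul1r.
rewrite {1}eK mulr_suml.
apply: ler_sum => j _.
have hj := @vert p e mu lambda d alpha (v j) pp ld hmu (hv j).
rewrite (eq_bigr (fun i => (t j * (p ^ alpha i * v j i)%N%:R)%R)); last first.
  by move=> i _; rewrite natrM mulrCA.
rewrite -mulr_sumr -natr_sum.
by apply: ler_wpM2l; [exact: ht | rewrite ler_nat].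
Qed.
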